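(* Let $G$ and $H$ be finite abelian groups. Then $G\cong H$ if and only if there exists an integer $n\geq 2$ such that the subgroup lattices $L(G^n)$ and $L(H^n)$ are isomorphic as lattices.
   Context: For a group $K$, $L(K)$ denotes the lattice of all subgroups of $K$ ordered by inclusion, and $K^n$ denotes the direct product of $n$ copies of $K$. *)

(* Defs.v *)
From HB Require Import structures.
From mathcomp Require Import all_boot all_fingroup.
Set Implicit Arguments. Unset Strict Implicit. Unset Printing Implicit Defensive.
Local Open Scope group_scope.

(* The n-fold direct power G^n of a group G : {group gT}, realized inside the
   finGroupType {dffun 'I_n -> gT} (pointwise product, from gproduct.v). *)
Definition gpow (gT : finGroupType) (G : {group gT}) (n : nat)
  : {group {dffun forall i : 'I_n, gT}} :=
  setXn_group (fun _ : 'I_n => G).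

Definition subgroup_lattice_iso (aT bT : finGroupType)
    (A : {group aT}) (B : {group bT}) : Prop :=
  exists f : {group aT} -> {group bT},
    [/\ {in subgroups A &, injective f},
        f @: subgroups A = subgroups B,
        {in subgroups A &, forall K L : {group aT}, f (K :&: L)%G = (f K :&: f L)%G}
      & {in subgroups A &, forall K L : {group aT}, f (K <*> L)%G = (f K <*> f L)%G}].

(* Main.v *)
Require Import Defs.
From HB Require Import structures.
From mathcomp Require Import all_boot all_fingroup all_solvable.
From mathcomp Require Import zify.
Set Implicit Arguments. Unset Strict Implicit. Unset Printing Implicit Defensive.
Local Open Scope group_scope.

Definition sg (T : finGroupType) (K : {group T}) := #|subgroups K|.
Definition chain (T : finGroupType) (K : {group T}) :=
  forall L M : {group T}, L \subset K -> M \subset K -> L \subset M \/ M \subset L.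
Definition atc (T : finGroupType) (K : {group T}) :=
  #|[set c in subgroups K | sg c == 2]|.

Definition QQ (T : finGroupType) (X C : {group T}) (p j : nat) :=
  [/\ chain C, sg C = j.+1 &
    (j = 0 \/ exists a : {group T}, [/\ a \subset C, sg a = 2 &
       exists b : {group T}, [/\ b \subset X, sg b = 2 & atc (a <*> b)%G = p.+1]])].
Definition rank2 (T : finGroupType) (X : {group T}) :=
  forall x, x \in X -> prime #[x] -> exists2 y, y \in X & #[y] = #[x] /\ y \notin <[x]>.

Section GT.
Variable T : finGroupType.
Implicit Types K L M C X a b : {group T}.

Lemma sg1 : sg [1 T]%G = 1%N.
Proof.
rewrite /sg -(cards1 [1 T]%G); apply: eq_card => L; rewrite !inE.
by apply/idP/eqP => [/trivgP E | ->]; [apply: val_inj | ].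
Qed.

Lemma sg_gt1 K : K :!=: 1 -> (1 < sg K)%N.
Proof.
move=> ntK; have H2 : #|[set [1 T]%G; K]| = 2.
  by rewrite cards2 eq_sym; case: eqP => // E; rewrite E eqxx in ntK.
rewrite /sg -[X in (X <= _)%N]H2 subset_leq_card //.
by apply/subsetP => L; rewrite !inE => /orP[] /eqP ->; rewrite ?sub1G.
Qed.

Lemma sg_prime K : (sg K == 2) = prime #|K|.
Proof.
apply/idP/idP => [sg2 | pK].
  have ntK : K :!=: 1.
    apply: (contraTneq _ sg2) => E; have -> : K = 1%G by apply: val_inj.
    by rewrite sg1.
  have q_dv := pdiv_dvd #|K|; set q := pdiv _ in q_dv.
  have q_pr : prime q by rewrite pdiv_prime // ltnNge -trivg_card_le1.
  have [x Kx ox] := Cauchy q_pr q_dv.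
  have [E|nE] := eqVneq <[x]>%G K; first by rewrite -E /= -orderE ox.
  have : [set 1%G; K] \proper subgroups K.
    rewrite properEneq; apply/andP; split.
      apply/eqP => E; have : <[x]>%G \in subgroups K by rewrite inE cycle_subG.
      rewrite -E !inE (negPf nE) orbF => /eqP/(congr1 val) /= /eqP.
      by rewrite cycle_eq1 -order_eq1 ox => /eqP q1; rewrite q1 in q_pr.
    by apply/subsetP => L; rewrite !inE => /orP[] /eqP ->; rewrite ?sub1G.
  move/proper_card; rewrite cards2 -/(sg K) (eqP sg2).
  by rewrite eq_sym; case: eqP => // E; rewrite E eqxx in ntK.
rewrite /sg; have -> : subgroups K = [set 1%G; K].
  apply/setP => L; rewrite !inE; apply/idP/idP => [sLK | /orP[] /eqP ->]; rewrite ?sub1G //.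
  case/primeP: (pK) => _ /(_ _ (cardSg sLK)) /orP[c1|cK]; apply/orP.
    by left; apply/eqP; apply: val_inj; apply/trivgP; rewrite -(card1_trivg (eqP c1)).
  have : (L :==: K) by rewrite eqEcard sLK (eqP cK) leqnn.
  by move=> /eqP E; right; apply/eqP; apply: val_inj.
have nK : [1 T]%G != K by apply/eqP => E; rewrite -E cards1 in pK.
by rewrite cards2 nK.
Qed.

Lemma chain_cyclic K : chain K -> cyclic K.
Proof.
move=> ch; case: (@arg_maxnP _ 1 (mem K) (fun x => #[x]) (group1 K)) => x Kx maxx.
have Kx2 : x \in K := Kx.
apply/cyclicP; exists x; apply/eqP; rewrite eqEsubset cycle_subG Kx2 andbT.
apply/subsetP => y Ky.
have sy : <[y]>%G \subset K by rewrite cycle_subG.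
have sx : <[x]>%G \subset K by rewrite cycle_subG.
case: (ch _ _ sy sx) => [/= | /= sxy]; first by rewrite cycle_subG.
have : <[x]> == <[y]> by rewrite eqEcard sxy -!orderE; apply: maxx.
by move/eqP ->; apply: cycle_id.
Qed.

Lemma cyclic_pfactor C p j L : prime p -> #|C| = (p ^ j)%N -> L \subset C ->
  #|L| = (p ^ logn p #|L|)%N /\ (logn p #|L| <= j)%N.
Proof.
move=> p_pr oC sLC; have := cardSg sLC; rewrite oC => /(dvdn_pfactor _ _ p_pr)[m lemj ->].
by rewrite pfactorK.
Qed.

Lemma cyclic_sg C p j : prime p -> cyclic C -> #|C| = (p ^ j)%N -> sg C = j.+1.
Proof.
move=> p_pr cC oC; pose h (L : {group T}) : 'I_j.+1 := inord (logn p #|L|).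
have hinj : {in subgroups C &, injective h}.
  move=> L M; rewrite !inE => sLC sMC /(congr1 val).
  have [oL leL] := cyclic_pfactor p_pr oC sLC.
  have [oM leM] := cyclic_pfactor p_pr oC sMC.
  rewrite /h /= !inordK ?ltnS // => E.
  have : L :==: M by rewrite (eq_subG_cyclic cC sLC sMC) oL oM E.
  by move/eqP => E2; apply: val_inj.
rewrite /sg -(card_in_imset hinj).
have -> : h @: subgroups C = [set: 'I_j.+1].
  apply/eqP; rewrite eqEsubset subsetT /=; apply/subsetP => i _.
  case/cyclicP: (cC) => x defC.
  have ox : #[x] = (p ^ j)%N by rewrite orderE -defC.
  have lei : (i <= j)%N by rewrite -ltnS ltn_ord.
  have e : (p ^ j = p ^ (j - i) * p ^ i)%N by rewrite -expnD subnK.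
  have dv : (p ^ (j - i) %| #[x])%N by rewrite ox dvdn_exp2l // leq_subr.
  apply/imsetP; exists <[x ^+ (p ^ (j - i))]>%G; first by rewrite inE defC cycleX.
  have oy : #|<[x ^+ (p ^ (j - i))]>%G| = (p ^ i)%N.
    rewrite /= -orderE orderXdiv // ox.
    by rewrite {1}e mulKn // expn_gt0 prime_gt0.
  by rewrite /h oy pfactorK // inord_val.
by rewrite cardsT card_ord.
Qed.

Lemma cyclic_chain C p j : prime p -> cyclic C -> #|C| = (p ^ j)%N -> chain C.
Proof.
move=> p_pr cC oC L M sLC sMC.
have [oL _] := cyclic_pfactor p_pr oC sLC.
have [oM _] := cyclic_pfactor p_pr oC sMC.
case/orP: (leq_total (logn p #|L|) (logn p #|M|)) => h; [left|right].
  rewrite -(cardSg_cyclic cC sLC sMC).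
  have : (p ^ logn p #|L| %| p ^ logn p #|M|)%N by rewrite dvdn_exp2l ?prime_gt1.
  by rewrite -oL -oM.
rewrite -(cardSg_cyclic cC sMC sLC).
have : (p ^ logn p #|M| %| p ^ logn p #|L|)%N by rewrite dvdn_exp2l ?prime_gt1.
by rewrite -oL -oM.
Qed.

Lemma count_cyc X (P : pred nat) : #|[set x in X | P #[x]]| =
  (\sum_(C in [set c in subgroups X | cyclic c && P #|c|]) totient #|C|)%N.
Proof.
rewrite -sum1_card.
rewrite (partition_big (fun x => <[x]>%G) (mem [set c in subgroups X | cyclic c && P #|c|])) /=; last first.
  by move=> x; rewrite !inE cycle_subG cycle_cyclic -orderE.
apply: eq_bigr => C; rewrite !inE => /and3P[sCX cC PC].
case/cyclicP: (cC) => c defC.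
rewrite sum1dep_card defC -orderE totient_gen; apply: eq_card => x; rewrite !inE /generator.
rewrite -val_eqE /= -defC; apply/idP/idP.
  by case/andP => _ /eqP ->.
move=> /eqP E; rewrite E eqxx andbT -cycle_subG -E sCX /= orderE -E.
by [].
Qed.

Lemma prime_subE (c a : {group T}) : prime #|a| -> prime #|c| -> c \subset a -> c = a.
Proof.
move=> pa pc sca; apply: val_inj; apply/eqP; rewrite eqEcard sca /=.
have := cardSg sca; rewrite (dvdn_prime2 pc pa) => /eqP ->; exact: leqnn.
Qed.

Lemma atc_prime a : prime #|a| -> atc a = 1%N.
Proof.
move=> pa; rewrite /atc (_ : [set c in subgroups a | sg c == 2] = [set a]) ?cards1 //.
apply/setP => c; rewrite !inE sg_prime.
apply/idP/idP => [/andP[sca pc] | /eqP ->]; last by rewrite subxx pa.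
by rewrite (prime_subE pa pc sca).
Qed.

Section Ab.
Variable X : {group T}.
Hypothesis abX : abelian X.

Lemma commX y z : y \in X -> z \in X -> commute y z.
Proof. by move=> Xy Xz; apply: (centsP abX). Qed.

Lemma atc_coprime a b : a \subset X -> b \subset X -> prime #|a| -> prime #|b| ->
  #|a| != #|b| -> (atc (a <*> b)%G <= 2)%N.
Proof.
move=> saX sbX pa pb nab.
have cab : b \subset 'C(a) by apply: subset_trans (sub_abelian_cent abX saX).
have co : coprime #|a| #|b| by rewrite prime_coprime // dvdn_prime2.
have cD : cyclic (a <*> b)%G.
  by rewrite /= cent_joinEr // cyclicM ?prime_cyclic.
have oD : #|(a <*> b)%G| = (#|a| * #|b|)%N by rewrite /= cent_joinEr // TI_cardMg ?coprime_TIg.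
rewrite /atc; apply: leq_trans (_ : #|[set a; b]| <= 2)%N; last by rewrite cards2; case: (a != b).
apply: subset_leq_card.
apply/subsetP => c; rewrite !inE sg_prime => /andP[scD pc].
have := cardSg scD; rewrite oD Euclid_dvdM // !dvdn_prime2 //.
by case/orP => /eqP E; apply/orP; [left|right]; apply/eqP; apply: val_inj; apply/eqP;
  rewrite (eq_subG_cyclic cD) ?E ?joing_subl ?joing_subr.
Qed.

Lemma atc_same a b p : a \subset X -> b \subset X -> prime p -> #|a| = p -> #|b| = p ->
  a != b -> atc (a <*> b)%G = p.+1.
Proof.
move=> saX sbX p_pr oa ob nab.
have cab : b \subset 'C(a) by apply: subset_trans (sub_abelian_cent abX saX).
have pa : prime #|a| by rewrite oa.
have tI : a :&: b = 1.
  apply: prime_TIg => //; apply/negP => sab; move/eqP: nab; apply.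
  by apply: prime_subE; rewrite ?ob ?oa.
set D := (a <*> b)%G.
have sDX : D \subset X by rewrite join_subG saX.
have oD : #|D| = (p * p)%N by rewrite /= cent_joinEr // TI_cardMg // oa ob.
have expD : forall x, x \in D -> x ^+ p = 1.
  move=> x; rewrite /= cent_joinEr // => /mulsgP[y z ya zb ->].
  rewrite expgMn; last by apply: commX; [exact: (subsetP saX) | exact: (subsetP sbX)].
  have yp : y ^+ p = 1 by apply/eqP; rewrite -order_dvdn -oa order_dvdG.
  have zp : z ^+ p = 1 by apply/eqP; rewrite -order_dvdn -ob order_dvdG.
  by rewrite yp zp mulg1.
have oC : forall C, C \subset D -> C != 1%G -> cyclic C -> #|C| = p.
  move=> C sCD nC1 /cyclicP[c defC].
  have Dc : c \in D by rewrite -cycle_subG -defC.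
  rewrite defC -orderE; apply/(prime_nt_dvdP p_pr); last by rewrite order_dvdn expD.
  rewrite order_eq1; apply: contra nC1 => /eqP c1.
  by apply/eqP; apply: val_inj; rewrite /= defC c1 cycle1.
have := count_cyc D predT.
have -> : #|[set x in D | predT #[x]]| = (p * p)%N.
  by rewrite -oD; apply: eq_card => x; rewrite !inE andbT.
have I1 : 1%G \in [set c in subgroups D | cyclic c && predT #|c|].
  by rewrite !inE sub1G cyclic1.
rewrite (bigD1 _ I1) /= cards1.
rewrite (eq_bigr (fun _ => p.-1)); last first.
  move=> C /andP[HC nC1]; have : C \in [set c in subgroups D | cyclic c && predT #|c|] := HC.
  rewrite !inE andbT => /andP[sCD cC].
  by rewrite oC // totient_prime.
rewrite sum_nat_const.
have -> : #|[pred i | (i \in [set c in subgroups D | cyclic c && predT #|c|]) && (i != 1%G)]| = atc D.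
  apply: eq_card => c; rewrite !inE sg_prime andbT.
  apply/idP/idP => [/andP[/andP[scD cc] nc1] | /andP[scD pc]].
    by rewrite scD oC.
  rewrite scD prime_cyclic //=; apply/eqP => c1; by rewrite c1 cards1 in pc.
have t1 : totient 1 = 1%N by []. rewrite t1 -subn1. move: (prime_gt1 p_pr).
move: (atc D) => N; nia.
Qed.

Lemma atc_val a b p : a \subset X -> b \subset X -> prime #|a| -> prime #|b| ->
  prime p -> atc (a <*> b)%G = p.+1 -> #|a| = p.
Proof.
move=> saX sbX pa pb p_pr.
case: (eqVneq a b) => [<-|nab].
  have -> : (a <*> a)%G = a by apply: val_inj; apply/joing_idPl.
  by rewrite atc_prime // => -[] p0; rewrite -p0 in p_pr.
case: (eqVneq #|a| #|b|) => [eab|ne].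
  by rewrite (atc_same saX sbX pa (erefl _) (esym eab) nab) => -[].
move=> E; have := atc_coprime saX sbX pa pb ne; rewrite E ltnS => p1.
by have := prime_gt1 p_pr; rewrite ltnNge p1.
Qed.

Hypothesis r2X : rank2 X.

Lemma charQ C p j : C \subset X -> prime p ->
  (cyclic C /\ #|C| = (p ^ j)%N) <-> QQ X C p j.
Proof.
move=> sCX p_pr; split.
  case=> cC oC; split; first exact: cyclic_chain p_pr cC oC.
    exact: cyclic_sg p_pr cC oC.
  case: j oC => [|j] oC; first by left.
  have pdC : (p %| #|C|)%N by rewrite oC dvdn_exp.
  right; have [y Cy oy] := Cauchy p_pr pdC.
  have Xy : y \in X := subsetP sCX y Cy.
  have py : prime #[y] by rewrite oy.
  have [z Xz [oz nzy]] := r2X Xy py.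
  exists <[y]>%G; split; first by rewrite cycle_subG.
    by apply/eqP; rewrite sg_prime /= -orderE oy.
  exists <[z]>%G; split; first by rewrite cycle_subG.
    by apply/eqP; rewrite sg_prime /= -orderE oz oy.
  apply: atc_same => //; rewrite ?cycle_subG ?p_pr //= -?orderE ?oz ?oy //.
  apply/eqP => /(congr1 val) /= E; move: nzy; rewrite E cycle_id.
  by [].
case=> ch sgC jE; have cC := chain_cyclic ch; split=> //.
case: j sgC jE => [|j] sgC jE.
  rewrite expn0; apply/eqP; rewrite -trivg_card1; apply/negPn/negP => nt.
  by have := sg_gt1 nt; rewrite sgC.
case: jE => [//|[a [saC sga [b [sbX sgb atcE]]]]].
move/eqP: sga; rewrite sg_prime => pa.
move/eqP: sgb; rewrite sg_prime => pb.
have oa := atc_val (subset_trans saC sCX) sbX pa pb p_pr atcE.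
have pC : p.-group C.
  apply/pgroupP => q q_pr qdC; have [w Cw ow] := Cauchy q_pr qdC.
  have swC : <[w]>%G \subset C by rewrite cycle_subG.
  case: (ch _ _ swC saC) => [swa | saw].
    by have := cardSg swa; rewrite /= -orderE ow oa dvdn_prime2 // => /eqP ->.
  by have := cardSg saw; rewrite /= -orderE ow oa (dvdn_prime2 p_pr q_pr) => /eqP E; rewrite E inE.
have oC := card_pgroup pC.
have := cyclic_sg p_pr cC oC; rewrite sgC => -[] E.
by rewrite {1}oC -E.
Qed.
End Ab.
End GT.
Section Lat.
Variables (aT bT : finGroupType) (A : {group aT}) (B : {group bT}).
Variable f : {group aT} -> {group bT}.
Hypotheses (finj : {in subgroups A &, injective f})
  (fim : f @: subgroups A = subgroups B)
  (fI : {in subgroups A &, forall K L : {group aT}, f (K :&: L)%G = (f K :&: f L)%G})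
  (fJ : {in subgroups A &, forall K L : {group aT}, f (K <*> L)%G = (f K <*> f L)%G}).

Lemma fS (K : {group aT}) : K \subset A -> f K \subset B.
Proof.
move=> sKA; have: f K \in f @: subgroups A by apply: imset_f; rewrite inE.
by rewrite fim inE.
Qed.

Lemma fsurj (M : {group bT}) : M \subset B -> exists2 K : {group aT}, K \subset A & M = f K.
Proof.
move=> sMB; have: M \in f @: subgroups A by rewrite fim inE.
by case/imsetP=> K; rewrite inE => sKA ->; exists K.
Qed.

Lemma fsub (K L : {group aT}) : K \subset A -> L \subset A -> (f K \subset f L) = (K \subset L).
Proof.
move=> sKA sLA; have KA : K \in subgroups A by rewrite inE.
have LA : L \in subgroups A by rewrite inE.
have KLA : (K :&: L)%G \in subgroups A by rewrite inE /= (subset_trans (subsetIl _ _)).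
apply/idP/idP => H.
  have E : (f K :&: f L)%G = f K by apply: val_inj => /=; apply/setIidPl.
  rewrite -(fI KA LA) in E; have := finj KLA KA E.
  by move/(congr1 val) => /= /setIidPl.
have E : (K :&: L)%G = K by apply: val_inj => /=; apply/setIidPl.
have := fI KA LA; rewrite E => /(congr1 val) /= ->; exact: subsetIr.
Qed.

Lemma fimS (K : {group aT}) : K \subset A -> f @: subgroups K = subgroups (f K).
Proof.
move=> sKA; apply/setP => M; rewrite inE; apply/imsetP/idP.
  case=> L; rewrite inE => sLK ->.
  by rewrite fsub // (subset_trans sLK).
move=> sMfK; have [L sLA defM] := fsurj (subset_trans sMfK (fS sKA)).
by exists L => //; rewrite inE -(fsub sLA sKA) -defM.
Qed.

Lemma fsg (K : {group aT}) : K \subset A -> sg (f K) = sg K.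
Proof.
move=> sKA; rewrite /sg -(fimS sKA) card_in_imset // => L M.
rewrite !inE => sLK sMK; apply: finj; rewrite inE (subset_trans _ sKA) //.
Qed.

Lemma fchain (K : {group aT}) : K \subset A -> chain (f K) <-> chain K.
Proof.
move=> sKA; split=> ch L M sLK sMK.
  have sLA := subset_trans sLK sKA; have sMA := subset_trans sMK sKA.
  rewrite -!(fsub sLA sMA) -(fsub sMA sLA); apply: ch; by rewrite fsub.
have [L' sL'A defL] := fsurj (subset_trans sLK (fS sKA)).
have [M' sM'A defM] := fsurj (subset_trans sMK (fS sKA)).
rewrite defL defM in sLK sMK *; rewrite !fsub //.
by apply: ch; rewrite -(fsub _ sKA).
Qed.

Lemma fatc (K : {group aT}) : K \subset A -> atc (f K) = atc K.
Proof.
move=> sKA; rewrite /atc.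
have -> : [set c in subgroups (f K) | sg c == 2] = f @: [set c in subgroups K | sg c == 2].
  apply/setP => M; rewrite inE; apply/andP/imsetP.
    case=> /[dup] MfK; rewrite -(fimS sKA) => /imsetP[L LK ->] sgL.
    exists L => //; rewrite inE LK -(fsg (subset_trans _ sKA)) //.
    by move: LK; rewrite inE.
  case=> L /[!inE] /andP[sLK sgL] ->.
  split; last by rewrite fsg // (subset_trans sLK).
  by rewrite fsub ?(subset_trans sLK).
rewrite card_in_imset // => L M; rewrite !inE => /andP[sLK _] /andP[sMK _].
by apply: finj; rewrite inE (subset_trans _ sKA).
Qed.

Lemma fQQ (C : {group aT}) p j : C \subset A -> QQ B (f C) p j <-> QQ A C p j.
Proof.
move=> sCA; rewrite /QQ (fsg sCA); split.
  case=> /(fchain sCA) ch sgC [j0|[a [saC sga [b [sbB sgb atb]]]]]; first by subst j; split => //; left.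
  split=> //; right.
  have [a' sa'A defa] := fsurj (subset_trans saC (fS sCA)).
  have [b' sb'A defb] := fsurj sbB.
  exists a'; split; first by rewrite -(fsub sa'A sCA) -defa.
    by rewrite -(fsg sa'A) -defa.
  exists b'; split=> //; first by rewrite -(fsg sb'A) -defb.
  rewrite -(fatc); last by rewrite join_subG sa'A.
  by rewrite fJ ?inE // -defa -defb.
case=> /(fchain sCA) ch sgC [j0|[a [saC sga [b [sbA sgb atb]]]]]; first by subst j; split => //; left.
have saA := subset_trans saC sCA.
split=> //; right; exists (f a); split; first by rewrite fsub.
  by rewrite fsg.
exists (f b); split; [exact: fS | by rewrite fsg |].
by rewrite -fJ ?inE // fatc // join_subG saA.
Qed.

End Lat.

Lemma LdE (T : finGroupType) (X : {group T}) m :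
  'Ldiv_m(X) = [set x in X | (fun d => d %| m)%N #[x]].
Proof. by apply/setP => x; rewrite !inE order_dvdn. Qed.

Lemma transfer (aT bT : finGroupType) (A : {group aT}) (B : {group bT})
  (f : {group aT} -> {group bT}) :
  {in subgroups A &, injective f} -> f @: subgroups A = subgroups B ->
  {in subgroups A &, forall K L : {group aT}, f (K :&: L)%G = (f K :&: f L)%G} ->
  {in subgroups A &, forall K L : {group aT}, f (K <*> L)%G = (f K <*> f L)%G} ->
  abelian A -> abelian B -> rank2 A -> rank2 B ->
  forall p k, prime p -> #|'Ldiv_(p ^ k)(A)| = #|'Ldiv_(p ^ k)(B)|.
Proof.
move=> finj fim fI fJ abA abB r2A r2B p k p_pr.
have key (C : {group aT}) j : C \subset A ->
    (cyclic C /\ #|C| = (p ^ j)%N) <-> (cyclic (f C) /\ #|f C| = (p ^ j)%N).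
  move=> sCA; rewrite (charQ abA r2A j sCA p_pr).
  rewrite (charQ abB r2B j (fS fim sCA) p_pr).
  by rewrite (fQQ finj fim fI fJ).
pose P : pred nat := fun d => (d %| p ^ k)%N.
have LdE' (T : finGroupType) (X : {group T}) : 'Ldiv_(p ^ k)(X) = [set x in X | P #[x]].
  by apply/setP => x; rewrite !inE /P order_dvdn.
rewrite !LdE' !count_cyc.
set IA := [set c in subgroups A | _]; set IB := [set c in subgroups B | _].
have IBE : IB = f @: IA.
  apply/setP => D; rewrite !inE; apply/idP/imsetP.
    case/andP => sDB /andP[cD dD].
    have [C sCA defD] := fsurj fim sDB.
    have /(dvdn_pfactor _ _ p_pr)[m lemk oD] := dD.
    have [cC oC] : cyclic C /\ #|C| = (p ^ m)%N by apply/(key C m sCA); rewrite -defD.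
    exists C => //; rewrite !inE /P sCA cC oC dvdn_exp2l ?prime_gt1 //.
  case=> C; rewrite !inE => /andP[sCA /andP[cC dC]] ->.
  have /(dvdn_pfactor _ _ p_pr)[m lemk oC] := dC.
  have [cD oD] := (key C m sCA).1 (conj cC oC).
  by rewrite /P (fS fim sCA) cD oD dvdn_exp2l ?prime_gt1.
rewrite IBE big_imset /=; last first.
  by move=> K L; rewrite !inE => /andP[sK _] /andP[sL _]; apply: finj; rewrite inE.
apply: eq_bigr => C; rewrite !inE => /andP[sCA /andP[cC dC]].
have /(dvdn_pfactor _ _ p_pr)[m lemk oC] := dC.
have [cD oD] := (key C m sCA).1 (conj cC oC).
by rewrite oD oC.
Qed.

Section Pow.
Variables (gT : finGroupType) (G : {group gT}) (n : nat).
Notation gTn := {dffun forall i : 'I_n, gT}.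

Lemma expg_ffun (x : gTn) m i : (x ^+ m) i = (x i) ^+ m.
Proof. by elim: m => [|m IH]; rewrite ?expg0 ?oneg_ffun // !expgS mulg_ffun IH. Qed.

Lemma in_gpow (x : gTn) : (x \in gpow G n) = [forall i, x i \in G].
Proof. by rewrite /gpow /= in_setXn. Qed.

Lemma abelian_gpow : abelian G -> abelian (gpow G n).
Proof.
move=> abG; apply/centsP => x; rewrite in_gpow => /forallP Gx y; rewrite in_gpow => /forallP Gy.
apply/ffunP => i; rewrite !mulg_ffun; exact: (centsP abG (x i) (Gx i) (y i) (Gy i)).
Qed.

Lemma card_Ldiv_gpow m : #|'Ldiv_m(gpow G n)| = (#|'Ldiv_m(G)| ^ n)%N.
Proof.
have -> : 'Ldiv_m(gpow G n) = setXn (fun _ : 'I_n => 'Ldiv_m(G)).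
  apply/setP => x; rewrite in_setXn in_setI in_gpow !inE.
  apply/andP/forallP => [[/forallP Gx /eqP xm] i | H].
    by rewrite !inE Gx /= -expg_ffun xm oneg_ffun.
  split; first by apply/forallP => i; have := H i; rewrite !inE => /andP[].
  apply/eqP/ffunP => i; rewrite expg_ffun oneg_ffun; have := H i.
  by rewrite !inE => /andP[_ /eqP].
by rewrite cardsXn prod_nat_const card_ord.
Qed.

Lemma rank2_gpow : (2 <= n)%N -> rank2 (gpow G n).
Proof.
move=> n2 x Gx px.
have [i0 ni0] : exists i0, x i0 != 1.
  case: (pickP (fun i => x i != 1)) => [i0 ni0|all1]; first by exists i0.
  have x1 : x = 1 by apply/ffunP => i; have := all1 i; rewrite oneg_ffun => /negbFE/eqP.
  by rewrite x1 order1 in px.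
pose o0 : 'I_n := Ordinal (leq_trans (isT : 0 < 2)%N n2).
pose o1 : 'I_n := Ordinal n2.
pose i1 := if i0 == o0 then o1 else o0.
have ni01 : i0 != i1.
  rewrite /i1; case: (eqVneq i0 o0) => [->|ne]; last by rewrite (negPf ne).
  by apply/eqP => /(congr1 val).
pose y := @dfung1 _ (fun _ => gT) i1 (x i0).
have yi1 : y i1 = x i0 by rewrite dfung1_id.
have yi0 : y i0 = 1 by rewrite dfung1_dflt // eq_sym.
have oxi0 : #[x i0] = #[x].
  apply/(prime_nt_dvdP px); first by rewrite order_eq1.
  by rewrite order_dvdn -expg_ffun expg_order oneg_ffun.
exists y.
  rewrite in_gpow; apply/forallP => j; rewrite ffunE.
  case: dfwithP => [|k _]; last exact: group1.
  by move: Gx; rewrite in_gpow => /forallP.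
split; first by rewrite -oxi0 order_injm ?injm_dfung1 ?inE.
apply/cycleP => -[m ym].
have : #[x i0] %| m.
  by rewrite order_dvdn -expg_ffun -ym yi0.
rewrite oxi0 order_dvdn => /eqP xm; rewrite xm in ym.
by move: ni0; rewrite -yi1 ym oneg_ffun eqxx.
Qed.
End Pow.

Section Ohm.
Variables (gT : finGroupType) (G : {group gT}) (p : nat).
Hypotheses (abG : abelian G) (p_pr : prime p).

Let P := 'O_p(G)%G.
Let P' := 'O_p^'(G)%G.
Let dP : P \x P' = G := nilpotent_pcoreC p (abelian_nil abG).

Lemma Ldiv_pcore k : 'Ldiv_(p ^ k)(G) = 'Ldiv_(p ^ k)(P).
Proof.
apply/setP => x; rewrite !inE; apply/andP/andP => [[Gx xk]|[Px xk]]; split => //.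
  rewrite -cycle_subG; apply: pcore_max.
    rewrite /pgroup -orderE; apply: (@pnat_dvd _ (p ^ k)); first by rewrite order_dvdn.
    by rewrite pnatX pnat_id.
  by rewrite -sub_abelian_normal // cycle_subG.
exact: (subsetP (pcore_sub _ _) x Px).
Qed.

Lemma logn_p' (K : {group gT}) : K \subset P' -> logn p #|K| = 0%N.
Proof.
move=> sK; apply: logn_coprime; rewrite prime_coprime // -p'natE //.
exact: pgroupS sK (pcore_pgroup _ _).
Qed.

Lemma logn_Ohm k : logn p #|'Ohm_k(G)| = logn p #|'Ldiv_(p ^ k)(G)|.
Proof.
have dO := Ohm_dprod k dP.
rewrite -(dprod_card dO) lognM ?cardG_gt0 // (logn_p' (Ohm_sub k P')) addn0.
rewrite Ldiv_pcore (OhmEabelian (pcore_pgroup _ _)) //.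
exact: abelianS (Ohm_sub _ _) (abelianS (pcore_sub _ _) abG).
Qed.

Lemma logn_card k : (#|G| <= k)%N -> logn p #|G| = logn p #|'Ldiv_(p ^ k)(G)|.
Proof.
move=> Gk.
rewrite -(dprod_card dP) lognM ?cardG_gt0 // (logn_p' (subxx P')) addn0 Ldiv_pcore.
congr (logn p _); apply: eq_card => x; rewrite !inE; case Px: (x \in P) => //=; symmetry.
rewrite -order_dvdn; apply: dvdn_trans (order_dvdG Px) _.
rewrite (card_pgroup (pcore_pgroup _ _)) dvdn_exp2l //.
apply: leq_trans (ltnW (ltn_logl _ (cardG_gt0 _))) _.
exact: leq_trans (subset_leq_card (pcore_sub _ _)) Gk.
Qed.
End Ohm.

Lemma abelian_type_eq (aT rT : finGroupType) (G : {group aT}) (H : {group rT}) :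
  abelian G -> abelian H -> #|G| = #|H| ->
  (forall p k, logn p #|'Ohm_k(G)| = logn p #|'Ohm_k(H)|) ->
  abelian_type G = abelian_type H.
Proof.
pose lnO p n (gT : finGroupType) (A : {set gT}) := logn p #|'Ohm_n.+1(A) : 'Ohm_n(A)|.
pose lni i p (gT : finGroupType) (A : {set gT}) := \max_(e < logn p #|A| | i < lnO p e _ A) e.+1.
suffices{G H} nth_abty (gT : finGroupType) (G : {group gT}) i:
    abelian G -> i < size (abelian_type G) ->
  nth 1%N (abelian_type G) i = (\prod_(p < #|G|.+1) p ^ lni i p _ G)%N.
- move=> cGG cHH oGH eO.
  have eq_sz: size (abelian_type G) = size (abelian_type H).
    rewrite !size_abelian_type // /rank oGH; apply: eq_bigr => p _.
    by rewrite !p_rank_abelian // eO.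
  apply: (@eq_from_nth _ 1%N) => // i lt_i_G; rewrite !nth_abty // -?eq_sz //.
  rewrite /lni oGH; apply: eq_bigr => p _; congr (p ^ _)%N.
  apply: eq_bigl => e; rewrite /lnO -!divgS ?(Ohm_leq _ (leqnSn _)) //=.
  by rewrite !logn_div ?cardSg ?(Ohm_leq _ (leqnSn _)) // !eO.
move=> cGG.
have (p): path leq 0 (map (logn p) (rev (abelian_type G))).
  move: (abelian_type_gt1 G) (abelian_type_dvdn_sorted G).
  case: abelian_type => //= m t; rewrite rev_cons map_rcons.
  elim: t m => //= n t IHt m /andP[/ltnW m_gt0 nt_gt1].
  rewrite -cats1 cat_path rev_cons map_rcons last_rcons /=.
  by case/andP=> /dvdn_leq_log-> // /IHt->.
have{cGG} [b defG <- b_sorted] := abelian_structure cGG.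
rewrite size_map => ltib; rewrite (nth_map 1 _ _ ltib); set x := nth 1 b i.
have Gx: x \in G.
  have: x \in b by rewrite mem_nth.
  rewrite -(bigdprodWY defG); case/splitPr=> bl br.
  by rewrite mem_gen // big_cat big_cons !inE cycle_id orbT.
have lexG: #[x] <= #|G| by rewrite dvdn_leq ?order_dvdG.
rewrite -[#[x]]partn_pi // (widen_partn _ lexG) big_mkord big_mkcond.
apply: eq_bigr => p _; transitivity (p ^ logn p #[x])%N.
  by rewrite -logn_gt0; case: posnP => // ->.
suffices lti_lnO e: (i < lnO p e _ G) = (e < logn p #[x]).
  congr (p ^ _)%N; apply/eqP; rewrite eqn_leq andbC; apply/andP; split.
    by apply/bigmax_leqP=> e; rewrite lti_lnO.
  have [-> //|logx_gt0] := posnP (logn p #[x]).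
  have lexpG: (logn p #[x]).-1 < logn p #|G|.
    by rewrite prednK // dvdn_leq_log ?order_dvdG.
  by rewrite (bigmax_sup (Ordinal lexpG)) ?(prednK, lti_lnO).
rewrite /lnO -(count_logn_dprod_cycle _ _ defG).
case: (ltnP e) (b_sorted p) => [lt_e_x | le_x_e].
  rewrite -(cat_take_drop i.+1 b) -map_rev rev_cat !map_cat cat_path.
  case/andP=> _ ordb; rewrite count_cat ((count _ _ =P i.+1) _) ?leq_addr //.
  rewrite -{2}(size_takel ltib) -all_count.
  move: ordb; rewrite (take_nth 1 ltib) -/x rev_rcons all_rcons /= lt_e_x.
  case/andP=> _ /=; move/(order_path_min leq_trans); apply: contraLR.
  rewrite -!has_predC !has_map; case/hasP=> y b_y /= le_y_e; apply/hasP.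
  by exists y; rewrite ?mem_rev //=; apply: contra le_y_e; apply: leq_trans.
rewrite -(cat_take_drop i b) -map_rev rev_cat !map_cat cat_path.
case/andP=> ordb _; rewrite count_cat -{1}(size_takel (ltnW ltib)) ltnNge.
rewrite addnC ((count _ _ =P 0) _) ?count_size //.
rewrite eqn0Ngt -has_count; apply/hasPn=> y b_y /=; rewrite -leqNgt.
apply: leq_trans le_x_e; have ->: x = last x (rev (drop i b)).
  by rewrite (drop_nth 1 ltib) rev_cons last_rcons.
rewrite -mem_rev in b_y; case/splitPr: (rev _) / b_y ordb => b1 b2.
rewrite !map_cat cat_path last_cat /=; case/and3P=> _ _.
move/(order_path_min leq_trans); case/lastP: b2 => // b3 x'.
by move/allP; apply; rewrite ?map_f ?last_rcons ?mem_rcons ?mem_head.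
Qed.

Lemma lattice_backward (gT hT : finGroupType) (G : {group gT}) (H : {group hT}) n :
  abelian G -> abelian H -> (2 <= n)%N -> subgroup_lattice_iso (gpow G n) (gpow H n) ->
  G \isog H.
Proof.
move=> abG abH n2 [f [finj fim fI fJ]].
have n0 : (0 < n)%N by apply: leq_trans n2.
have tr := transfer finj fim fI fJ (abelian_gpow n abG) (abelian_gpow n abH)
  (@rank2_gpow _ G n n2) (@rank2_gpow _ H n n2).
have eL p k : prime p -> #|'Ldiv_(p ^ k)(G)| = #|'Ldiv_(p ^ k)(H)|.
  move=> p_pr; have := tr p k p_pr; rewrite !card_Ldiv_gpow => E.
  by apply/eqP; rewrite -(eqn_exp2r _ _ n0) E.
have eO p k : logn p #|'Ohm_k(G)| = logn p #|'Ohm_k(H)|.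
  case: (boolP (prime p)) => [p_pr|np]; last by rewrite !(_ : forall m, logn p m = 0%N) // => m; rewrite lognE (negPf np).
  by rewrite !logn_Ohm // eL.
have oGH : #|G| = #|H|.
  apply: eqn_from_log; rewrite ?cardG_gt0 // => p.
  case: (boolP (prime p)) => [p_pr|np]; last by rewrite !(_ : forall m, logn p m = 0%N) // => m; rewrite lognE (negPf np).
  rewrite (logn_card abG p_pr (leq_addr #|H| #|G|)).
  by rewrite (logn_card abH p_pr (leq_addl #|G| #|H|)) eL.
by rewrite eq_abelian_type_isog // (abelian_type_eq abG abH oGH eO).
Qed.

Lemma lattice_forward (gT hT : finGroupType) (G : {group gT}) (H : {group hT}) n :
  G \isog H -> subgroup_lattice_iso (gpow G n) (gpow H n).
Proof.
case/isogP => f injf fG.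
pose psi (x : {dffun 'I_n -> gT}) : {dffun 'I_n -> hT} := [ffun i => f (x i)].
have psiM : {in gpow G n &, {morph psi : x y / x * y}}.
  move=> x y; rewrite !in_gpow => /forallP Gx /forallP Gy; apply/ffunP => i.
  by rewrite !ffunE morphM ?Gx ?Gy.
pose mo := @Morphism _ _ (gpow G n) psi psiM.
have injm : 'injm mo.
  apply/injmP => x y Ax Ay /ffunP E; apply/ffunP => i; have := E i; rewrite !ffunE.
  move: Ax Ay; rewrite !in_gpow => /forallP Gx /forallP Gy.
  exact: (injmP injf) _ _ (Gx i) (Gy i).
have mA : mo @* gpow G n = gpow H n.
  apply/setP => z; rewrite morphimEdom; apply/imsetP/idP.
    case=> x Ax ->; rewrite in_gpow; apply/forallP => i; rewrite ffunE -fG.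
    by apply: mem_morphim; move: Ax; rewrite in_gpow => /forallP.
  rewrite in_gpow => /forallP Hz.
  have zG i : z i \in f @* G by rewrite fG.
  exists [ffun i => invm injf (z i)].
    rewrite in_gpow; apply/forallP => i; rewrite ffunE.
    have := mem_morphim (invm_morphism injf) (zG i) (zG i).
    by rewrite morphim_invm.
  by apply/ffunP => i; rewrite !ffunE invmK.
exists (fun K => (mo @* K)%G); split.
- move=> K L; rewrite !inE => sK sL E; apply: val_inj.
  exact: (injm_morphim_inj injm sK sL (congr1 val E)).
- apply/setP => M; rewrite inE; apply/imsetP/idP.
    by case=> K; rewrite inE => sK ->; rewrite -mA; apply: morphimS.
  move=> sMB; exists (mo @*^-1 M)%G; first by rewrite inE morphpre_sub.
  by apply: val_inj; rewrite /= morphpreK // mA.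
- move=> K L; rewrite !inE => sK sL; apply: val_inj; exact: injmI.
- move=> K L; rewrite !inE => sK sL; apply: val_inj; exact: morphimY.
Qed.

Unset Implicit Arguments.
Local Close Scope group_scope.

Theorem theorem2 (gT hT : finGroupType) (G : {group gT}) (H : {group hT})
    (abG : abelian G) (abH : abelian H) :
  G \isog H <->
  exists n : nat, (2 <= n)%N /\ subgroup_lattice_iso (gpow G n) (gpow H n).
Proof.
split; first by move=> iso; exists 2; split => //; exact: lattice_forward.
by case=> n [n2 L]; exact: lattice_backward abG abH n2 L.
Qed.
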